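(* Consider a two-bus network consisting of a single line with admittance $g-jb$ ($g,b\ge 0$) joining bus 1 and bus 2, where the voltage magnitudes $|V_1|,|V_2|>0$ are fixed. Let $\underline{\theta}\in[-\pi,0]$ and $\overline{\theta}\in[0,\pi]$, and let $\mathcal{P}\subset\mathbb{R}^2$ be the set of all points $(P_1,P_2)$ with $$P_1=|V_1|^2 g+|V_1||V_2| b\sin\theta-|V_1||V_2| g\cos\theta,\qquad P_2=|V_2|^2 g-|V_1||V_2| b\sin\theta-|V_1||V_2| g\cos\theta$$ obtained as $\theta$ ranges over $[\underline{\theta},\overline{\theta}]$. Then $\mathcal{O}(\mathcal{P})=\mathcal{O}(\mathrm{conv}(\mathcal{P}))$.
   Context: For a set $\mathcal{A}\subseteq\mathbb{R}^m$, a point $x\in\mathcal{A}$ is Pareto-optimal if there is no $y\in\mathcal{A}$ with $y\le x$ componentwise and strict inequality in at least one coordinate; $\mathcal{O}(\mathcal{A})$ denotes the set of Pareto-optimal points of $\mathcal{A}$. $\mathrm{conv}(\cdot)$ denotes the convex hull. Here $\theta=\theta_1-\theta_2$ is the difference of the voltage phase angles at the two buses, and $P_i$ is the real power injected at bus $i$. *)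

(* Defs.v *)
From Stdlib Require Import Reals List.
Open Scope R_scope.

Definition pt := (R * R)%type.

Definition dominates (y x : pt) : Prop :=
  fst y <= fst x /\ snd y <= snd x /\ (fst y < fst x \/ snd y < snd x).

Definition pareto (A : pt -> Prop) (x : pt) : Prop :=
  A x /\ ~ (exists y, A y /\ dominates y x).

Definition wsum (l : list (R * pt)) : pt :=
  (fold_right (fun wp s => fst wp * fst (snd wp) + s) 0 l,
   fold_right (fun wp s => fst wp * snd (snd wp) + s) 0 l).

Definition conv (A : pt -> Prop) (x : pt) : Prop :=
  exists l : list (R * pt),
    Forall (fun wp => 0 <= fst wp /\ A (snd wp)) l /\
    fold_right (fun wp s => fst wp + s) 0 l = 1 /\
    x = wsum l.

Definition two_bus_P (g b V1 V2 thl thu : R) (p : pt) : Prop :=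
  exists th, thl <= th <= thu /\
    fst p = V1 ^ 2 * g + V1 * V2 * b * sin th - V1 * V2 * g * cos th /\
    snd p = V2 ^ 2 * g - V1 * V2 * b * sin th - V1 * V2 * g * cos th.

(* Main.v *)
Require Import Defs.
From Stdlib Require Import Reals.
From Stdlib Require Import Lra Psatz List.
Open Scope R_scope.

Lemma conv_lin (A : pt -> Prop) (al be ga : R) :
  (forall z, A z -> al * fst z + be * snd z >= ga) ->
  forall x, conv A x -> al * fst x + be * snd x >= ga.
Proof.
  intros H x [l [Hf [Hs ->]]].
  assert (K : forall l : list (R * pt), Forall (fun wp => 0 <= fst wp /\ A (snd wp)) l ->
    al * fst (wsum l) + be * snd (wsum l) >= ga * fold_right (fun wp s => fst wp + s) 0 l).
  { induction l0 as [|[w p] l0 IH]; intros F; simpl.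
    - lra.
    - inversion F as [|? ? [Hw HA] F']; subst. simpl in *.
      specialize (IH F'). specialize (H p HA).
      unfold wsum in *; simpl in *.
      assert (w * (al * fst p + be * snd p) >= w * ga) by nra. nra. }
  specialize (K l Hf). rewrite Hs in K. lra.
Qed.

Lemma conv_single (A : pt -> Prop) x : A x -> conv A x.
Proof.
  intros H. exists ((1, x) :: nil). split; [constructor; [simpl; split; [lra|exact H]|constructor]|].
  split; [simpl; lra|]. destruct x as [a b]; unfold wsum; simpl; f_equal; ring.
Qed.

Lemma sin_le_top thl thu t : - PI <= thl -> thl <= t <= thu -> 0 <= thu < PI/2 ->
  sin t <= sin thu.
Proof.
  intros H1 H2 H3.
  destruct (Rle_dec (- (PI/2)) t).
  - apply sin_incr_1; lra.
  - assert (0 <= sin (- t)) by (apply sin_ge_0; lra).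
    rewrite sin_neg in H.
    assert (0 <= sin thu) by (apply sin_ge_0; lra). lra.
Qed.

Lemma sin_ge_bot thl thu t : thu <= PI -> thl <= t <= thu -> - (PI/2) < thl <= 0 ->
  sin thl <= sin t.
Proof.
  intros H1 H2 H3.
  destruct (Rle_dec t (PI/2)).
  - apply sin_incr_1; lra.
  - assert (0 <= sin t) by (apply sin_ge_0; lra).
    assert (0 <= sin (- thl)) by (apply sin_ge_0; lra).
    rewrite sin_neg in H0. lra.
Qed.

Section Main.
Variables g b V1 V2 thl thu : R.
Hypotheses (hg : 0 <= g) (hb : 0 <= b) (hV1 : 0 < V1) (hV2 : 0 < V2)
  (hthl : - PI <= thl <= 0) (hthu : 0 <= thu <= PI).

Let K := V1 * V2.
Let f1 t := V1 ^ 2 * g + V1 * V2 * b * sin t - V1 * V2 * g * cos t.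
Let f2 t := V2 ^ 2 * g - V1 * V2 * b * sin t - V1 * V2 * g * cos t.

Lemma inP t : thl <= t <= thu -> two_bus_P g b V1 V2 thl thu (f1 t, f2 t).
Proof. intros H. exists t. split; [exact H|]. simpl. split; reflexivity. Qed.

Lemma claim y : conv (two_bus_P g b V1 V2 thl thu) y ->
  exists z, two_bus_P g b V1 V2 thl thu z /\ fst z <= fst y /\ snd z <= snd y.
Proof.
  intros Hy.
  assert (Hab : thl <= thu) by lra.
  assert (c1 : forall c, thl <= c <= thu -> continuity_pt f1 c).
  { intros c _. unfold f1. reg. }
  assert (c2 : forall c, thl <= c <= thu -> continuity_pt f2 c).
  { intros c _. unfold f2. reg. }
  destruct (continuity_ab_min f1 thl thu Hab c1) as [tl [Hl Htl]].
  destruct (continuity_ab_min f2 thl thu Hab c2) as [th [Hh Hth]].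
  assert (By1 : 1 * fst y + 0 * snd y >= f1 tl).
  { apply (conv_lin (two_bus_P g b V1 V2 thl thu) 1 0 (f1 tl)); [|exact Hy].
    intros z [t [Ht [E1 E2]]]. assert (fst z = f1 t) by (rewrite E1; reflexivity). specialize (Hl t Ht). lra. }
  assert (By2 : 0 * fst y + 1 * snd y >= f2 th).
  { apply (conv_lin (two_bus_P g b V1 V2 thl thu) 0 1 (f2 th)); [|exact Hy].
    intros z [t [Ht [E1 E2]]]. assert (snd z = f2 t) by (rewrite E2; reflexivity). specialize (Hh t Ht). lra. }
  destruct (Rle_dec (f1 th - f2 th) (fst y - snd y)) as [C1|C1].
  { exists (f1 th, f2 th). split; [apply inP; exact Hth|]. simpl. lra. }
  destruct (Rle_dec (fst y - snd y) (f1 tl - f2 tl)) as [C2|C2].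
  { exists (f1 tl, f2 tl). split; [apply inP; exact Htl|]. simpl. lra. }
  apply Rnot_le_lt in C1. apply Rnot_le_lt in C2.
  assert (HK : 0 < K) by (unfold K; nra).
  assert (Ev : forall t, f1 t - f2 t = (V1^2 - V2^2) * g + 2 * K * b * sin t)
    by (intros; unfold f1, f2, K; ring).
  rewrite !Ev in C1, C2.
  assert (hb' : 0 < b).
  { destruct hb as [|E]; auto. subst b. lra. }
  set (w := (fst y - snd y - (V1^2 - V2^2) * g) / (2 * K * b)).
  assert (Hkb : 0 < 2 * K * b) by nra.
  assert (Wl : sin tl < w).
  { unfold w. apply Rmult_lt_reg_r with (2 * K * b); auto. field_simplify; nra. }
  assert (Wh : w < sin th).
  { unfold w. apply Rmult_lt_reg_r with (2 * K * b); auto. field_simplify; nra. }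
  assert (W1 : -1 < w < 1).
  { pose proof (SIN_bound tl). pose proof (SIN_bound th). lra. }
  set (t := asin w).
  assert (Hst : sin t = w) by (apply sin_asin; lra).
  assert (Bt : - (PI/2) < t < PI/2) by (apply asin_bound_lt; lra).
  assert (Tu : t <= thu).
  { destruct (Rle_dec t thu) as [|n]; auto. exfalso.
    destruct (Rle_dec (PI/2) thu). { lra. }
    assert (sin th <= sin thu) by (apply (sin_le_top thl); lra).
    assert (sin thu <= sin t) by (apply sin_incr_1; lra). lra. }
  assert (Tl : thl <= t).
  { destruct (Rle_dec thl t) as [|n]; auto. exfalso.
    destruct (Rle_dec thl (- (PI/2))). { lra. }
    assert (sin thl <= sin tl) by (apply (sin_ge_bot thl thu); lra).
    assert (sin t <= sin thl) by (apply sin_incr_1; lra). lra. }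
  assert (Hct : 0 < cos t) by (apply cos_gt_0; lra).
  set (al := b * cos t - g * sin t). set (be := b * cos t + g * sin t).
  assert (Tan : al * fst y + be * snd y >= al * f1 t + be * f2 t).
  { apply (conv_lin (two_bus_P g b V1 V2 thl thu)); [|exact Hy].
    intros z [s [Hs [E1 E2]]]. rewrite E1, E2. unfold al, be, f1, f2.
    pose proof (sin2_cos2 s). pose proof (sin2_cos2 t). unfold Rsqr in *.
    assert (0 <= V1 * V2 * b * g * ((cos s - cos t)^2 + (sin s - sin t)^2)).
    { apply Rmult_le_pos; [|apply Rplus_le_le_0_compat; apply pow2_ge_0]. apply Rmult_le_pos; [|lra]. apply Rmult_le_pos; [|lra]. apply Rmult_le_pos; lra. }
    match goal with |- ?L >= ?R => assert (E : L - R = V1*V2*b*g*((cos s - cos t)^2 + (sin s - sin t)^2)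
      + V1*V2*b*g*(sin t * sin t + cos t * cos t - 1) - V1*V2*b*g*(sin s * sin s + cos s * cos s - 1)) by ring end.
    rewrite H, H0 in E. lra. }
  assert (Dv : fst y - snd y = f1 t - f2 t).
  { rewrite Ev, Hst. unfold w. field. lra. }
  exists (f1 t, f2 t). split; [apply inP; lra|]. simpl.
  assert (Hs : 0 < al + be) by (unfold al, be; nra).
  assert ((al + be) * (fst y - f1 t) >= 0) by nra.
  assert (fst y - f1 t >= 0).
  { destruct (Rle_dec 0 (fst y - f1 t)); [lra|]. nra. }
  lra.
Qed.

End Main.

Theorem lemma1 (g b V1 V2 thl thu : R)
  (hg : 0 <= g) (hb : 0 <= b) (hV1 : 0 < V1) (hV2 : 0 < V2)
  (hthl : - PI <= thl <= 0) (hthu : 0 <= thu <= PI) :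
  forall x : pt,
    pareto (two_bus_P g b V1 V2 thl thu) x <->
    pareto (conv (two_bus_P g b V1 V2 thl thu)) x.
Proof.
  intros x. pose proof (claim g b V1 V2 thl thu hg hb hV1 hV2 hthl hthu) as Cl.
  unfold pareto, dominates. split.
  - intros [Hx Hn]. split; [apply conv_single; exact Hx|].
    intros [y [Hy D]]. destruct (Cl y Hy) as [z [Hz [Z1 Z2]]].
    apply Hn. exists z. split; [exact Hz|]. lra.
  - intros [Hx Hn]. destruct (Cl x Hx) as [z [Hz [Z1 Z2]]].
    destruct (Req_dec (fst z) (fst x)) as [E1|E1];
    [destruct (Req_dec (snd z) (snd x)) as [E2|E2]|].
    + assert (z = x) by (destruct z, x; simpl in *; subst; reflexivity). subst z.
      split; [exact Hz|]. intros [y [Hy D]]. apply Hn. exists y.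
      split; [apply conv_single; exact Hy|exact D].
    + exfalso. apply Hn. exists z. split; [apply conv_single; exact Hz|]. lra.
    + exfalso. apply Hn. exists z. split; [apply conv_single; exact Hz|]. lra.
Qed.
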